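(* Let $\mathfrak A,\mathfrak B$ be $L$-algebras and $H:\mathfrak A\to\mathfrak B$ an isomorphism. Then for all $a,b,c,d\in A$, $$a:b::_{\mathfrak A}c:d\iff Ha:Hb::_{\mathfrak B}Hc:Hd,$$ i.e. $H$ is a proportional homomorphism.
   Context: $L$ is a language of algebras (constants are $0$-ary function symbols), $X$ a denumerable set of variables, $T_{L,X}$ the $L$-terms, $X(s)$ the variables of $s$, $s^{\mathfrak A}$ the induced term function. A justification is a pair $s\to t$ of terms with $X(t)\subseteq X(s)$. $\uparrow_{\mathfrak A}(a\to b)$ is the set of justifications $s\to t$ with $a=s^{\mathfrak A}(\mathbf o)$, $b=t^{\mathfrak A}(\mathbf o)$ for some tuple $\mathbf o$ over $A$; $\uparrow_{(\mathfrak A,\mathfrak B)}(a\to b:\!\cdot\,c\to d):=\uparrow_{\mathfrak A}(a\to b)\cap\uparrow_{\mathfrak B}(c\to d)$. A justification is trivial in $(\mathfrak A,\mathfrak B)$ if it lies in $\uparrow_{(\mathfrak A,\mathfrak B)}(a'\to b':\!\cdot\,c'\to d')$ for all $a',b'\in A,c',d'\in B$. The arrow proportion $a\to b:\!\cdot\,c\to d$ holds in $(\mathfrak A,\mathfrak B)$ iff either (i) all justifications in $\uparrow_{\mathfrak A}(a\to b)\cup\uparrow_{\mathfrak B}(c\to d)$ are trivial, or (ii) $J_d:=\uparrow_{(\mathfrak A,\mathfrak B)}(a\to b:\!\cdot\,c\to d)$ contains a non-trivial justification and for every $d'\in B$, $J_d\subseteq J_{d'}$ implies that $J_{d'}$ contains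 a non-trivial justification and $J_{d'}\subseteq J_d$ (inclusions ignoring trivial justifications). Then $a:b::_{(\mathfrak A,\mathfrak B)}c:d$ iff $a\to b:\!\cdot\,c\to d$ and $b\to a:\!\cdot\,d\to c$ hold in $(\mathfrak A,\mathfrak B)$ and $c\to d:\!\cdot\,a\to b$ and $d\to c:\!\cdot\,b\to a$ hold in $(\mathfrak B,\mathfrak A)$. We write $::_{\mathfrak A}$ for $::_{(\mathfrak A,\mathfrak A)}$. *)

(* Defs.v *)
From mathcomp Require Import all_boot.
Set Implicit Arguments. Unset Strict Implicit. Unset Printing Implicit Defensive.

Record language := Language { sym : Type; arity : sym -> nat }.

Record algebra (L : language) := Algebra {
  carrier :> Type;
  op : forall f : sym L, ('I_(arity f) -> carrier) -> carrier }.

Inductive term (L : language) : Type :=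
| Var : nat -> term L
| App : forall f : sym L, ('I_(arity f) -> term L) -> term L.

Inductive occurs (L : language) (x : nat) : term L -> Prop :=
| occ_var : occurs x (Var L x)
| occ_app : forall f (args : 'I_(arity f) -> term L) (i : 'I_(arity f)),
    occurs x (args i) -> occurs x (App args).

Fixpoint eval (L : language) (A : algebra L) (o : nat -> A) (s : term L) : A :=
  match s with
  | Var x => o x
  | App f args => @op L A f (fun i => eval o (args i))
  end.

Definition justification (L : language) (s t : term L) : Prop :=
  forall x, occurs x t -> occurs x s.

Definition up1 (L : language) (A : algebra L) (a b : A) (s t : term L) : Prop :=
  justification s t /\ exists o : nat -> A, a = eval o s /\ b = eval o t.

Definition up2 (L : language) (A B : algebra L) (a b : A) (c d : B)
  (s t : term L) : Prop := up1 a b s t /\ up1 c d s t.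

Definition trivial_just (L : language) (A B : algebra L) (s t : term L) : Prop :=
  forall (a' b' : A) (c' d' : B), up2 a' b' c' d' s t.

Definition subset_nt (L : language) (A B : algebra L)
  (J J' : term L -> term L -> Prop) : Prop :=
  forall s t, J s t -> ~ trivial_just A B s t -> J' s t.

Definition has_nontrivial (L : language) (A B : algebra L)
  (J : term L -> term L -> Prop) : Prop :=
  exists s t, J s t /\ ~ trivial_just A B s t.

Definition arrow_prop (L : language) (A B : algebra L) (a b : A) (c d : B) : Prop :=
  (forall s t, (up1 a b s t \/ up1 c d s t) -> trivial_just A B s t)
  \/
  (has_nontrivial A B (up2 a b c d) /\
   forall d' : B,
     subset_nt A B (up2 a b c d) (up2 a b c d') ->
     has_nontrivial A B (up2 a b c d') /\ subset_nt A B (up2 a b c d') (up2 a b c d)).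

Definition analogy (L : language) (A B : algebra L) (a b : A) (c d : B) : Prop :=
  [/\ arrow_prop a b c d, arrow_prop b a d c,
      arrow_prop c d a b & arrow_prop d c b a].

Definition is_hom (L : language) (A B : algebra L) (H : A -> B) : Prop :=
  forall (f : sym L) (args : 'I_(arity f) -> A),
    H (@op L A f args) = @op L B f (fun i => H (args i)).

Definition is_iso (L : language) (A B : algebra L) (H : A -> B) : Prop :=
  is_hom H /\ bijective H.

(* Main.v *)
Require Import Defs.
From mathcomp Require Import all_boot.
From Stdlib Require Import FunctionalExtensionality Setoid.

Section Transfer.
Variables (L : language) (A B : algebra L) (H : A -> B) (K : B -> A).
Hypotheses (hH : is_hom H) (HK : cancel H K) (KH : cancel K H).

Lemma eval_hom (o : nat -> A) s : eval (fun x => H (o x)) s = H (eval o s).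
Proof.
elim: s => [x|f args IH] //=. rewrite hH. congr (op _).
by apply: functional_extensionality => i.
Qed.

Lemma up1_tr (a b : A) s t : up1 a b s t <-> up1 (H a) (H b) s t.
Proof.
split=> [[j [o [-> ->]]]|[j [o [ea eb]]]]; split=> //.
  by exists (fun x => H (o x)); rewrite !eval_hom.
exists (fun x => K (o x)).
have E : forall u, eval o u = H (eval (fun x => K (o x)) u).
  move=> u; rewrite -eval_hom; congr eval; apply: functional_extensionality => x.
  by rewrite KH.
by rewrite -(HK a) -(HK b) ea eb !E !HK.
Qed.

Lemma up2_tr (a b c d : A) s t :
  up2 a b c d s t <-> up2 (H a) (H b) (H c) (H d) s t.
Proof. by rewrite /up2 !up1_tr. Qed.

Lemma triv_tr s t : trivial_just A A s t <-> trivial_just B B s t.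
Proof.
split=> T a b c d.
  by rewrite -(KH a) -(KH b) -(KH c) -(KH d) -up2_tr.
by rewrite up2_tr.
Qed.

Lemma hasnt_tr (a b c d : A) :
  has_nontrivial A A (up2 a b c d) <-> has_nontrivial B B (up2 (H a) (H b) (H c) (H d)).
Proof.
split=> [[s [t [U V]]]|[s [t [U V]]]]; exists s, t.
  by rewrite -up2_tr -triv_tr.
by rewrite up2_tr triv_tr.
Qed.

Lemma sub_tr (a b c d a' b' c' d' : A) :
  subset_nt A A (up2 a b c d) (up2 a' b' c' d') <->
  subset_nt B B (up2 (H a) (H b) (H c) (H d)) (up2 (H a') (H b') (H c') (H d')).
Proof.
split=> S s t.
  by rewrite -!up2_tr -triv_tr; apply: S.
by rewrite !up2_tr triv_tr; apply: S.
Qed.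

Lemma arrow_tr (a b c d : A) :
  arrow_prop a b c d <-> arrow_prop (H a) (H b) (H c) (H d).
Proof.
split=> [[P|[P Q]]|[P|[P Q]]].
- left=> s t; rewrite -!up1_tr -triv_tr; exact: P.
- right; split; first by rewrite -hasnt_tr.
  move=> d'; rewrite -(KH d') -sub_tr -hasnt_tr -sub_tr; exact: Q.
- left=> s t; rewrite triv_tr !up1_tr; exact: P.
- right; split; first by rewrite hasnt_tr.
  move=> d'; rewrite sub_tr hasnt_tr sub_tr; exact: Q.
Qed.
End Transfer.

Theorem mainTheorem3 (L : language) (A B : algebra L) (H : A -> B) :
  is_iso H ->
  forall a b c d : A,
    analogy (A := A) (B := A) a b c d <->
    analogy (A := B) (B := B) (H a) (H b) (H c) (H d).
Proof.
move=> [hH [K HK KH]] a b c d.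
have T := @arrow_tr _ _ _ _ _ hH HK KH.
split=> [[h1 h2 h3 h4]|[h1 h2 h3 h4]]; split; by [apply/T | apply/(T _ _ _ _)].
Qed.
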